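(* Let $\tilde g$ be a Kerr–Schild–de Sitter metric and $g=\Omega^2\tilde g$ a geodesic conformal extension with boundary metric $\gamma$, in the setting where the electric part of the rescaled Weyl tensor at $\mathscr I$ is $D=A(y\otimes y-\frac1n\gamma)$ with $A$ nowhere zero, written as $A=\kappa/f^n$ with $\kappa\in\mathbb R\setminus\{0\}$ and $f>0$ on $\mathscr I$ (here $y$ is the restriction to $\mathscr I$ of the unit vector in the decomposition $k=s(u+y)$). Then, with the notation $L=\nabla^\gamma_\alpha y^\alpha$ and $a_\beta$ as in the decomposition $\nabla^\gamma_\alpha y_\beta=y_\alpha a_\beta+\Pi_{\alpha\beta}+\frac{L}{n-1}h_{\alpha\beta}+w_{\alpha\beta}$, $\nabla^\gamma_\alpha f=\frac{fL}{n-1}y_\alpha-fa_\alpha$. (Equivalently: for a unit vector field $y$ and positive $f$ on $(\Sigma,\gamma)$, the tensor $f^{-n}(y\otimes y-\frac1n\gamma)$ is divergence-free with respect to $\gamma$ if and only if this equation holds.)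
   Context: $n\ge3$. Kerr–Schild–de Sitter spacetime: $\tilde g=\tilde g_{dS}+\widetilde{\mathcal H}\tilde k\otimes\tilde k$ ($\tilde g_{dS}$ locally de Sitter, $\tilde k$ null, $\widetilde{\mathcal H}$ smooth) solving $\widetilde R_{\alpha\beta}=n\lambda\tilde g_{\alpha\beta}$, $\lambda>0$, with a smooth conformal extension having locally conformally flat $\mathscr I$ and $\Omega^2\widetilde{\mathcal H}\tilde k\otimes\tilde k=0$ at $\mathscr I$. Geodesic conformal extension: $g^{\mu\nu}\nabla_\mu\Omega\nabla_\nu\Omega=-\lambda$. $u$: $g$-unit timelike vector along $\nabla\Omega$; $k=\tilde k$ decomposed as $k_\alpha=s(u_\alpha+y_\alpha)$ with $y$ unit spacelike orthogonal to $u$. $D_{\alpha\beta}=(\Omega^{2-n}C^\mu{}_{\alpha\nu\beta}u_\mu u^\nu)|_{\mathscr I}$ ($C$ Weyl tensor of $g$) is a symmetric traceless divergence-free tensor with respect to $\gamma$. $h_{\alpha\beta}=\gamma_{\alpha\beta}-y_\alpha y_\beta$; in the decomposition, $\Pi$ is symmetric traceless, $w$ skew, $a$ a one-form, all orthogonal to $y$. *)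

(* Defs.v *)
(* Local-coordinate Riemannian geometry on an open
   subset of R^n (points are row vectors 'rV[R]_n). *)
From HB Require Import structures.
From mathcomp Require Import all_boot all_order all_algebra.
From mathcomp Require Import all_classical all_reals all_analysis.
Set Implicit Arguments. Unset Strict Implicit. Unset Printing Implicit Defensive.
Import Order.TTheory GRing.Theory Num.Theory.
Import numFieldNormedType.Exports.
Local Open Scope ring_scope.

Section Geom.
Context {R : realType} {n : nat}.
Notation pt := 'rV[R]_n.

Definition metric := pt -> 'M[R]_n.
Definition vfield := pt -> 'I_n -> R.
Definition tfield := pt -> 'I_n -> 'I_n -> R.

Definition pd (i : 'I_n) (F : pt -> R) (x : pt) : R :=
  derive F x (delta_mx 0 i).

Definition ginv (g : metric) (x : pt) : 'M[R]_n := invmx (g x).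

Definition christoffel (g : metric) (k i j : 'I_n) (x : pt) : R :=
  2^-1 * \sum_(l < n) ginv g x k l *
    (pd i (fun z => g z j l) x + pd j (fun z => g z i l) x
     - pd l (fun z => g z i j) x).

Definition lower (g : metric) (y : vfield) (x : pt) (i : 'I_n) : R :=
  \sum_(j < n) g x i j * y x j.

Definition cov_low (g : metric) (y : vfield) (x : pt) (a b : 'I_n) : R :=
  pd a (fun z => lower g y z b) x
  - \sum_(l < n) christoffel g l a b x * lower g y x l.

Definition div_vec (g : metric) (y : vfield) (x : pt) : R :=
  \sum_(a < n) (pd a (fun z => y z a) x
                + \sum_(l < n) christoffel g a a l x * y x l).

Definition cov_T2 (g : metric) (T : tfield) (x : pt) (m a b : 'I_n) : R :=
  pd m (fun z => T z a b) x
  - \sum_(l < n) (christoffel g l m a x * T x l b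
                  + christoffel g l m b x * T x a l).

Definition div_T2 (g : metric) (T : tfield) (x : pt) (b : 'I_n) : R :=
  \sum_(a < n) \sum_(m < n) ginv g x a m * cov_T2 g T x m a b.

Definition Dtensor (g : metric) (y : vfield) (f : pt -> R) (kappa : R) : tfield :=
  fun z a b => kappa / f z ^+ n *
    (lower g y z a * lower g y z b - n%:R^-1 * g z a b).

Definition hproj (g : metric) (y : vfield) (x : pt) (a b : 'I_n) : R :=
  g x a b - lower g y x a * lower g y x b.

End Geom.

(* Main.v *)
Require Import Defs.
From HB Require Import structures.
From mathcomp Require Import all_boot all_order all_algebra.
From mathcomp Require Import all_classical all_reals all_analysis.
From mathcomp Require Import ring lra.
Import Order.TTheory GRing.Theory Num.Theory.
Import numFieldNormedType.Exports.
Local Open Scope ring_scope.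
Local Open Scope classical_set_scope.
Section Alg.
Context {R : realType} {n : nat}.

Lemma sum_delta (F : 'I_n -> R) b : \sum_k F k * (1%:M : 'M[R]_n) k b = F b.
Proof.
rewrite (bigD1 b) //= mxE eqxx mulr1n mulr1 big1 ?addr0 // => k kb.
by rewrite mxE (negbTE kb) mulr0n mulr0.
Qed.

Lemma sum_delta' (F : 'I_n -> R) b : \sum_k (1%:M : 'M[R]_n) b k * F k = F b.
Proof.
rewrite -[RHS](sum_delta F b); apply: eq_bigr => k _; rewrite !mxE eq_sym mulrC //.
Qed.

Lemma contrK (Gi G : 'M[R]_n) (Y : 'I_n -> R) m : Gi^T *m G = 1%:M ->
  \sum_a Gi a m * (\sum_j G a j * Y j) = Y m.
Proof.
move=> H.
under eq_bigr do rewrite mulr_sumr.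
rewrite exchange_big /= -[RHS](sum_delta' Y m) -H.
apply: eq_bigr => j _; rewrite mxE mulr_suml; apply: eq_bigr => a _.
by rewrite mxE mulrA.
Qed.
End Alg.
Lemma contrE (R : realType) n (Gi G : 'M[R]_n) (c : R) (E : 'I_n -> R) b :
  Gi^T *m G = 1%:M ->
  \sum_l (c * \sum_k Gi l k * E k) * G l b = c * E b.
Proof.
move=> H.
under eq_bigr do rewrite -mulrA.
rewrite -mulr_sumr; congr (_ * _).
under eq_bigr do rewrite mulr_suml.
rewrite exchange_big /= -[RHS](sum_delta E b) -H.
apply: eq_bigr => k _; rewrite mxE mulr_sumr; apply: eq_bigr => l _.
by rewrite mxE; ring.
Qed.

Lemma metric_compat (R : realType) n (g : 'rV[R]_n -> 'M[R]_n) x :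
  (g x)^T = g x -> (ginv g x)^T *m g x = 1%:M ->
  (forall m a b, pd m (fun z => g z b a) x = pd m (fun z => g z a b) x) ->
  forall m a b, pd m (fun z => g z a b) x =
    \sum_l (christoffel g l m a x * g x l b + christoffel g l m b x * g x a l).
Proof.
move=> gs H ds m a b.
have gs' : forall i j, g x i j = g x j i by move=> i j; rewrite -[in LHS]gs mxE.
under [in RHS]eq_bigr do rewrite [g x a _]gs'.
rewrite big_split /=.
rewrite /christoffel.
rewrite !(@contrE _ _ _ _ _ _ _ H) /= (ds m b a).
by field.
Qed.
Lemma posdef_unit (R : realType) n (M : 'M[R]_n) :
  (forall v : 'rV[R]_n, v != 0 -> 0 < (v *m M *m v^T) 0 0) -> M \in unitmx.
Proof.
move=> H; rewrite unitmxE unitfE; apply/negP => /det0P [v v0 vM].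
by have := H v v0; rewrite vM mul0mx mxE ltxx.
Qed.
Section An.
Context {R : realType} {n : nat}.
Notation pt := 'rV[R]_n.
Implicit Types (F G : pt -> R) (x v : pt).

Lemma dM F G x v : derivable F x v -> derivable G x v ->
  derive (fun z => F z * G z) x v = F x * derive G x v + G x * derive F x v.
Proof. by move=> dF dG; have := deriveM dF dG. Qed.
Lemma dbM F G x v : derivable F x v -> derivable G x v ->
  derivable (fun z => F z * G z) x v.
Proof. by move=> dF dG; have := derivableM dF dG. Qed.
Lemma dB F G x v : derivable F x v -> derivable G x v ->
  derive (fun z => F z - G z) x v = derive F x v - derive G x v.
Proof. by move=> dF dG; have := deriveB dF dG. Qed.
Lemma dbB F G x v : derivable F x v -> derivable G x v ->
  derivable (fun z => F z - G z) x v.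
Proof. by move=> dF dG; have := derivableB dF dG. Qed.
Lemma dbsum m (H : 'I_m -> pt -> R) x v : (forall i, derivable (H i) x v) ->
  derivable (fun z => \sum_(i < m) H i z) x v.
Proof. by move=> dH; have := derivable_sum dH; rewrite fct_sumE. Qed.
Lemma dcst (c : R) x v : derive (fun _ : pt => c) x v = 0.
Proof. exact: (derive_cst c). Qed.
Lemma dbcst (c : R) x v : derivable (fun _ : pt => c) x v.
Proof. exact: (derivable_cst c). Qed.
Lemma dbX F x v k : derivable F x v -> derivable (fun z => F z ^+ k) x v.
Proof. by move=> dF; have := (@derivableX _ _ F k x v dF); rewrite exprfctE. Qed.
Lemma dX F x v k : derivable F x v ->
  derive (fun z => F z ^+ k) x v = k%:R * F x ^+ k.-1 * derive F x v.
Proof. by move=> dF; have := deriveX k dF; rewrite exprfctE. Qed.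
Lemma dbV F x v : F x != 0 -> derivable F x v -> derivable (fun z => (F z)^-1) x v.
Proof. exact: derivableV. Qed.
Lemma dV F x v : F x != 0 -> derivable F x v ->
  derive (fun z => (F z)^-1) x v = - (F x) ^- 2 * derive F x v.
Proof. exact: deriveV. Qed.

Lemma dA_formula (f : pt -> R) (kappa : R) x v : (0 < n)%N -> f x != 0 ->
  derivable f x v ->
  derive (fun z => kappa / f z ^+ n) x v =
    - (n%:R * (kappa / f x ^+ n) / f x) * derive f x v.
Proof.
move=> n0 fx0 df.
have fn0 : f x ^+ n != 0 by rewrite expf_neq0.
have dfn := dbX _ _ _ n df.
rewrite (dM _ _ _ _ (dbcst kappa x v) (dbV _ _ _ fn0 dfn)) dcst mulr0 addr0.
rewrite (dV _ _ _ fn0 dfn) (dX _ _ _ n df).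
have hp : f x ^+ n.-1 != 0 by rewrite expf_neq0.
rewrite (_ : f x ^+ n = f x * f x ^+ n.-1); last by rewrite -exprS prednK.
by field; rewrite fx0 hp.
Qed.

Lemma db_lower (g : pt -> 'M[R]_n) (y : pt -> 'I_n -> R) x v b :
  (forall i j, derivable (fun z => g z i j) x v) ->
  (forall i, derivable (fun z => y z i) x v) ->
  derivable (fun z => lower g y z b) x v.
Proof.
move=> dg dy; rewrite /lower.
apply: (dbsum _ (fun j z => g z b j * y z j)) => j.
exact: dbM.
Qed.

Lemma cov_T2_D (g : pt -> 'M[R]_n) (y : pt -> 'I_n -> R) (f : pt -> R) kappa x :
  (0 < n)%N -> f x != 0 ->
  (forall v, derivable f x v) ->
  (forall i j v, derivable (fun z => g z i j) x v) ->
  (forall i v, derivable (fun z => y z i) x v) ->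
  (forall m a b, pd m (fun z => g z a b) x =
    \sum_l (christoffel g l m a x * g x l b + christoffel g l m b x * g x a l)) ->
  forall m a b, cov_T2 g (Dtensor g y f kappa) x m a b =
    pd m (fun z => kappa / f z ^+ n) x *
      (lower g y x a * lower g y x b - n%:R^-1 * g x a b)
    + kappa / f x ^+ n * (cov_low g y x m a * lower g y x b
                          + lower g y x a * cov_low g y x m b).
Proof.
move=> n0 fx0 df dg dy mc m a b.
pose v : 'rV[R]_n := delta_mx 0 m.
have fn0 : f x ^+ n != 0 by rewrite expf_neq0.
have dP : derivable (fun z => kappa / f z ^+ n) x v.
  exact: (dbM _ _ _ _ (dbcst kappa x v) (dbV _ _ _ fn0 (dbX _ _ _ n (df v)))).
have dl : forall c, derivable (fun z => lower g y z c) x v.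
  by move=> c; apply: db_lower.
have dQ1 := dbM _ _ _ _ (dl a) (dl b).
have dQ2 := dbM _ _ _ _ (dbcst n%:R^-1 x v) (dg a b v).
rewrite /cov_T2 /Dtensor /pd -/v.
rewrite (dM _ _ _ _ dP (dbB _ _ _ _ dQ1 dQ2)).
rewrite (dB _ _ _ _ dQ1 dQ2) (dM _ _ _ _ (dl a) (dl b)).
rewrite (dM _ _ _ _ (dbcst _ x v) (dg a b v)) dcst mulr0 addr0.
have := mc m a b; rewrite /pd -/v => ->.
rewrite /cov_low /pd -/v.
set A := kappa / f x ^+ n.
set c := n%:R^-1.
rewrite [X in _ - X = _](_ : _ = A * (lower g y x b * \sum_l christoffel g l m a x * lower g y x l
   + lower g y x a * \sum_l christoffel g l m b x * lower g y x l
   - c * \sum_l (christoffel g l m a x * g x l b + christoffel g l m b x * g x a l))).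
  by ring.
rewrite !mulr_sumr -sumrN -!big_split /= mulr_sumr.
by apply: eq_bigr => l _; ring.
Qed.
End An.

Ltac sumlin := rewrite ?mulr_sumr -?sumrN -?big_split /=; apply: eq_bigr => ? _; ring.
Section Fin.
Context {R : realType} {n : nat}.

Lemma final_alg (G Gi : 'M[R]_n) (Y ll aa dA : 'I_n -> R)
  (C P W : 'I_n -> 'I_n -> R) (A L : R) :
  (2 <= n)%N -> G^T = G -> Gi^T = Gi -> Gi^T *m G = 1%:M ->
  (forall b, ll b = \sum_j G b j * Y j) ->
  \sum_i \sum_j G i j * Y i * Y j = 1 ->
  (forall b, \sum_a \sum_m Gi a m * (dA m * (ll a * ll b - n%:R^-1 * G a b)
        + A * (C m a * ll b + ll a * C m b)) = 0) ->
  \sum_i \sum_j Gi i j * P i j = 0 ->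
  (forall j, \sum_i Y i * P i j = 0) ->
  (forall i j, W i j = - W j i) ->
  (forall j, \sum_i Y i * W i j = 0) ->
  \sum_i Y i * aa i = 0 ->
  (forall al be, C al be = ll al * aa be + P al be
       + L / (n%:R - 1) * (G al be - ll al * ll be) + W al be) ->
  forall b, dA b = n%:R * A * (aa b - L / (n%:R - 1) * ll b).
Proof.
move=> n2 Gs Gis GiG hll hunit hdiv hPtr hYP hW hYW hYa hC.
have nn : n%:R != 0 :> R by rewrite pnatr_eq0 -lt0n (leq_trans _ n2).
have n1 : n%:R - 1 != 0 :> R by rewrite subr_eq0 pnatr_eq1 gtn_eqF.
have Gs' : forall i j, G i j = G j i by move=> i j; rewrite -[in LHS]Gs mxE.
have Gis' : forall i j, Gi i j = Gi j i by move=> i j; rewrite -[in LHS]Gis mxE.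
set k := L / (n%:R - 1).
set c := n%:R^-1 : R.
have K1 : forall m, \sum_a Gi a m * ll a = Y m.
  move=> m; rewrite -(contrK _ _ Y m GiG); apply: eq_bigr => a _; by rewrite hll.
have K1' : forall a, \sum_m Gi a m * ll m = Y a.
  by move=> a; rewrite -K1; apply: eq_bigr => m _; rewrite Gis'.
have K2 : forall m b, \sum_a Gi a m * G a b = (1%:M : 'M[R]_n) m b.
  by move=> m b; rewrite -GiG mxE; apply: eq_bigr => a _; rewrite mxE.
have Yl : \sum_i Y i * ll i = 1.
  rewrite -hunit; apply: eq_bigr => i _; rewrite hll mulr_sumr.
  by apply: eq_bigr => j _; ring.
have YG : forall b, \sum_m Y m * G m b = ll b.
  by move=> b; rewrite hll; apply: eq_bigr => m _; rewrite Gs' mulrC.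
have YC : forall b, \sum_m Y m * C m b = aa b.
  move=> b.
  under eq_bigr do rewrite hC -/k.
  transitivity (aa b * \sum_i Y i * ll i + \sum_i Y i * P i b + k * \sum_i Y i * G i b
     - k * ll b * \sum_i Y i * ll i + \sum_i Y i * W i b); first by sumlin.
  by rewrite Yl hYP YG hYW; ring.
have T1 : \sum_m \sum_a Gi a m * ll m * aa a = 0.
  rewrite exchange_big /=; transitivity (\sum_i Y i * aa i); last exact: hYa.
  apply: eq_bigr => a _; rewrite -K1' mulr_suml.
  by apply: eq_bigr => m _; ring.
have T2 : \sum_m \sum_a Gi a m * P m a = 0.
  transitivity (\sum_i \sum_j Gi i j * P i j); last exact: hPtr.
  by apply: eq_bigr => m _; apply: eq_bigr => a _; rewrite Gis'.
have T3 : \sum_m \sum_a Gi a m * G m a = n%:R.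
  transitivity (\sum_(m < n) (1 : R)); last by rewrite sumr_const card_ord.
  apply: eq_bigr => m _; rewrite -[RHS](_ : 1%:M m m = 1); last by rewrite mxE eqxx.
  by rewrite -K2; apply: eq_bigr => a _; rewrite Gs'.
have T4 : \sum_m \sum_a Gi a m * ll m * ll a = 1.
  rewrite -Yl; apply: eq_bigr => m _; rewrite -K1 mulr_suml.
  by apply: eq_bigr => a _; ring.
have T5 : \sum_m \sum_a Gi a m * W m a = 0.
  set S := (X in X = 0).
  have : S = - S.
    rewrite /S {1}exchange_big /= -sumrN; apply: eq_bigr => a _.
    rewrite -sumrN; apply: eq_bigr => m _; rewrite hW Gis'; ring.
  move=> h; lra.
have TrC : \sum_m \sum_a Gi a m * C m a = L.
  under eq_bigr do under eq_bigr do rewrite hC -/k.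
  transitivity (\sum_m \sum_a Gi a m * ll m * aa a + \sum_m \sum_a Gi a m * P m a
    + k * (\sum_m \sum_a Gi a m * G m a - \sum_m \sum_a Gi a m * ll m * ll a)
    + \sum_m \sum_a Gi a m * W m a).
    rewrite ?mulr_sumr -?sumrN -?big_split /= ?mulr_sumr -?big_split /=; apply: eq_bigr => m _.
    do 3 rewrite ?mulr_sumr -?sumrN -?big_split /=; apply: eq_bigr => a _.
    ring.
  rewrite T1 T2 T3 T4 T5 /k; field; exact: n1.
have inner : forall m b, \sum_a Gi a m * (dA m * (ll a * ll b - n%:R^-1 * G a b)
        + A * (C m a * ll b + ll a * C m b)) =
    dA m * (Y m * ll b - c * 1%:M m b) + A * ll b * (\sum_a Gi a m * C m a)
    + A * (Y m * C m b).
  move=> m b; rewrite -K1 -K2.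
  do 3 rewrite ?mulr_sumr ?mulr_suml -?sumrN -?big_split /=.
  by apply: eq_bigr => a _; rewrite /c; ring.
set s := \sum_m dA m * Y m.
have Eb : forall b, s * ll b - c * dA b + A * (L * ll b + aa b) = 0.
  move=> b; rewrite -(hdiv b) exchange_big /=.
  under [RHS]eq_bigr do rewrite inner.
  rewrite !big_split /= -!mulr_sumr TrC YC.
  have -> : \sum_m dA m * (Y m * ll b - c * 1%:M m b) = s * ll b - c * dA b.
    rewrite -(sum_delta dA b) /s mulr_suml mulr_sumr -sumrB.
    by apply: eq_bigr => m _; ring.
  ring.
have hs : s * (1 - c) + A * L = 0.
  have : \sum_b Y b * (s * ll b - c * dA b + A * (L * ll b + aa b)) = 0.
    by apply: big1 => b _; rewrite Eb mulr0.
  move=> <-.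
  transitivity (s * \sum_b Y b * ll b - c * \sum_b dA b * Y b
     + A * (L * \sum_b Y b * ll b + \sum_b Y b * aa b)).
    by rewrite Yl hYa -/s; ring.
  do 3 rewrite ?mulr_sumr ?mulr_suml -?sumrN -?big_split /=.
  by apply: eq_bigr => i _; ring.
move=> b.
have -> : dA b = n%:R * (c * dA b) by rewrite /c; field.
have -> : c * dA b = s * ll b + A * (L * ll b + aa b).
  by have h := Eb b; apply/eqP; rewrite -subr_eq0; apply/eqP; rewrite -oppr0 -h; ring.
have -> : s = (s * (1 - c)) * n%:R / (n%:R - 1).
  by rewrite /c; field; rewrite n1 nn.
have -> : s * (1 - c) = - (A * L) by apply/eqP; rewrite -subr_eq0 opprK hs.
rewrite /k; field; exact: n1.
Qed.
End Fin.

Theorem lemma4p4 (R : realType) (n : nat) (U : set 'rV[R]_n)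
  (g : 'rV[R]_n -> 'M[R]_n) (y : 'rV[R]_n -> 'I_n -> R) (f : 'rV[R]_n -> R)
  (kappa : R)
  (a : 'rV[R]_n -> 'I_n -> R) (Pi w : 'rV[R]_n -> 'I_n -> 'I_n -> R) :
  (3 <= n)%N ->
  open U ->
  (* gamma: smooth-enough Riemannian metric on U *)
  (forall x, U x -> (g x)^T = g x) ->
  (forall x, U x -> forall v : 'rV[R]_n, v != 0 -> 0 < (v *m g x *m v^T) 0 0) ->
  (forall x, U x -> forall i j, differentiable (fun z => g z i j) x) ->
  (* y: differentiable unit vector field *)
  (forall x, U x -> forall i, differentiable (fun z => y z i) x) ->
  (forall x, U x -> \sum_(i < n) \sum_(j < n) g x i j * y x i * y x j = 1) ->
  (* f > 0 differentiable, kappa <> 0 *)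
  (forall x, U x -> differentiable f x) ->
  (forall x, U x -> 0 < f x) ->
  kappa != 0 ->
  (* D = (kappa / f^n)(y (x) y - gamma/n) is divergence-free *)
  (forall x, U x -> forall b, div_T2 g (Dtensor g y f kappa) x b = 0) ->
  (* the decomposition of nabla_a y_b *)
  (forall x, U x -> forall i j, Pi x i j = Pi x j i) ->
  (forall x, U x -> \sum_(i < n) \sum_(j < n) ginv g x i j * Pi x i j = 0) ->
  (forall x, U x -> forall j, \sum_(i < n) y x i * Pi x i j = 0) ->
  (forall x, U x -> forall i j, w x i j = - w x j i) ->
  (forall x, U x -> forall j, \sum_(i < n) y x i * w x i j = 0) ->
  (forall x, U x -> \sum_(i < n) y x i * a x i = 0) ->
  (forall x, U x -> forall al be,
     cov_low g y x al be =
       lower g y x al * a x be + Pi x al be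
       + div_vec g y x / (n%:R - 1) * hproj g y x al be + w x al be) ->
  (* conclusion: nabla_a f = f L/(n-1) y_a - f a_a *)
  forall x, U x -> forall al,
    pd al f x = f x * div_vec g y x / (n%:R - 1) * lower g y x al - f x * a x al.
Proof.
move=> n3 hU gs gpd gdiff ydiff yunit fdiff fpos k0 hdiv Pis Pitr yPi wanti yw ya hdec x Ux al.
have n0 : (0 < n)%N by apply: leq_trans n3.
have fx0 : f x != 0 by rewrite gt_eqF // fpos.
have gu : g x \in unitmx by apply: posdef_unit; apply: gpd.
have Gis : (ginv g x)^T = ginv g x by rewrite /ginv trmx_inv gs.
have GiG : (ginv g x)^T *m g x = 1%:M by rewrite Gis /ginv mulVmx.
have ds : forall m a b, pd m (fun z => g z b a) x = pd m (fun z => g z a b) x.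
  move=> m a0 b; rewrite /pd; apply: near_eq_derive.
  apply: filterS (hU x Ux) => z Uz.
  by rewrite -[in RHS](gs z Uz) mxE.
have mc := @metric_compat _ _ g x (gs x Ux) GiG ds.
have df : forall v, derivable f x v by move=> v; apply: diff_derivable; apply: fdiff.
have dg : forall i j v, derivable (fun z => g z i j) x v.
  by move=> i j v; apply: diff_derivable; apply: gdiff.
have dy : forall i v, derivable (fun z => y z i) x v.
  by move=> i v; apply: diff_derivable; apply: ydiff.
have cT := @cov_T2_D _ _ g y f kappa x n0 fx0 df dg dy mc.
set A := kappa / f x ^+ n.
set dA := fun m => pd m (fun z => kappa / f z ^+ n) x.
have key := @final_alg R n (g x) (ginv g x) (y x) (lower g y x) (a x) dA
  (cov_low g y x) (Pi x) (w x) A (div_vec g y x).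
have E := key (leq_trans (isT : (2 <= 3)%N) n3) (gs x Ux) Gis GiG
  (fun b => erefl) (yunit x Ux).
have hd : forall b, \sum_a0 \sum_m ginv g x a0 m *
    (dA m * (lower g y x a0 * lower g y x b - n%:R^-1 * g x a0 b) +
     A * (cov_low g y x m a0 * lower g y x b + lower g y x a0 * cov_low g y x m b)) = 0.
  move=> b; rewrite -[RHS](hdiv x Ux b) /div_T2; apply: eq_bigr => a0 _.
  by apply: eq_bigr => m _; rewrite cT.
have E2 := E hd (Pitr x Ux) (yPi x Ux) (wanti x Ux) (yw x Ux) (ya x Ux)
  (hdec x Ux) al.
have dAf : dA al = - (n%:R * A / f x) * pd al f x by apply: dA_formula.
have nn : n%:R != 0 :> R by rewrite pnatr_eq0 -lt0n.
have A0 : A != 0 by rewrite /A mulf_neq0 // invr_eq0 expf_neq0.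
have -> : pd al f x = (- (n%:R * A / f x) * pd al f x) * (- (f x / (n%:R * A))).
  by field; rewrite fx0 nn A0.
have n1 : n%:R - 1 != 0 :> R by rewrite subr_eq0 pnatr_eq1 gtn_eqF // (leq_trans _ n3).
by rewrite -dAf E2; field; rewrite n1 A0 nn.
Qed.
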